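(* Let $n>5$ with $n\equiv 0\pmod 4$, and consider odd $r\in[3,n-3]$. Then $E(D_n^s[r,n-r])$ attains its maximum at $r=3$, and $$E(D_n^s[3,n-3])>E(D_n^s[5,n-5])>\dots>E\!\left(D_n^s\!\left[\tfrac{n-2}{2},\tfrac{n+2}{2}\right]\right),$$ the chain running over odd $r=3,5,7,\dots,\frac{n-2}{2}$.
   Context: A signed digraph (sidigraph) is a digraph in which every arc carries a sign $+1$ or $-1$; the energy of a sidigraph is the sum of the absolute values of the real parts of the eigenvalues of its signed adjacency matrix. For $k\ge 2$, $C_k$ denotes a directed cycle of length $k$ all of whose arc signs multiply to $+1$. It is known that for odd $k$, $E(C_k)=\csc\frac{\pi}{2k}$ (and the same holds for a negative cycle of odd length). For integers $p,q\ge2$ with $p+q\le n$, $D_n^s[p,q]$ denotes an $n$-vertex sidigraph whose only directed cycles are two vertex-disjoint positive cycles $C_p$ and $C_q$ (other vertices lie on no directed cycle); its energy is $E(C_p)+E(C_q)$. *)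

(* Defs.v *)
From HB Require Import structures.
From mathcomp Require Import all_boot all_order all_algebra all_field.
Set Implicit Arguments. Unset Strict Implicit. Unset Printing Implicit Defensive.
Import Order.TTheory GRing.Theory Num.Theory.
Local Open Scope ring_scope.

(* The spectrum (eigenvalues with algebraic multiplicity) of a square matrix
   over algC: a sequence s with char_poly A = \prod_(z <- s) ('X - z). *)
Definition spectrum (n : nat) (A : 'M[algC]_n) : seq algC :=
  sval (closed_field_poly_normal (char_poly A)).

Definition energy (n : nat) (A : 'M[algC]_n) : algC :=
  \sum_(z <- spectrum A) `|'Re z|.

(* Signed adjacency matrix of a concrete representative of D_n^s[p,q]:
   vertices 0..p-1 form the directed cycle 0->1->...->p-1->0,
   vertices p..p+q-1 form the directed cycle p->...->p+q-1->p,
   all arcs have sign +1 (so both cycles are positive); the remaining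
   n-p-q vertices are isolated (lie on no directed cycle). *)
Definition Ds_mx (n p q : nat) : 'M[algC]_n :=
  \matrix_(i < n, j < n)
    (if (i < p)%N then ((j : nat) == (i.+1 %% p)%N)%:R
     else if (i < p + q)%N then ((j : nat) == (p + ((i - p).+1 %% q))%N)%:R
     else 0).

Definition E_D (n p q : nat) : algC := energy (Ds_mx n p q).

(* Main.v *)
From Stdlib Require Import Reals Lra Psatz.
From Coquelicot Require Import Coquelicot.

Module StdPart.
Local Open Scope R_scope.
Definition kf t := t^2 * cos t / (sin t)^2.
Definition kf' t := t * (2 * sin t * cos t - t - t * (cos t)^2) / (sin t)^3.

Lemma kf_deriv t : 0 < t < PI -> derivable_pt_lim kf t (kf' t).
Proof.
intros [h1 h2]; assert (hs : 0 < sin t) by (apply sin_gt_0; lra).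
apply is_derive_Reals; unfold kf, kf'.
auto_derive.
- intro H; nra.
- assert (hsc := sin2_cos2 t). unfold Rsqr in hsc.
  assert (hn : sin t <> 0) by lra.
  field_simplify; try (split; lra); try lra.
  assert (c2 : cos t ^ 2 = 1 - sin t ^ 2) by (simpl; lra).
  rewrite c2; field; lra.
Qed.

Lemma kf'_neg t : 0 < t <= PI/2 -> kf' t < 0.
Proof.
intros [h1 h2].
assert (hs : 0 < sin t) by (apply sin_gt_0; lra).
assert (hc : 0 <= cos t) by (apply cos_ge_0; lra).
assert (hst : sin t < t) by (apply sin_lt_x; lra).
unfold kf'.
assert (hnum : 2 * sin t * cos t - t - t * (cos t)^2 < 0).
{ assert (0 <= t * (1 - cos t)^2) by (apply Rmult_le_pos; [lra| apply pow2_ge_0]).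
  assert (0 <= cos t * (t - sin t)) by (apply Rmult_le_pos; lra).
  destruct (Req_dec (cos t) 1) as [e|ne].
  - rewrite e. simpl. lra.
  - assert (0 < (1 - cos t)^2) by (apply pow2_gt_0; lra).
    assert (0 < t * (1 - cos t)^2) by (apply Rmult_lt_0_compat; lra).
    nra. }
assert (0 < sin t ^ 3) by (apply pow_lt; lra).
unfold Rdiv. apply Rmult_neg_pos; [nra | apply Rinv_0_lt_compat; lra].
Qed.

Lemma kf_decr t1 t2 : 0 < t1 -> t1 < t2 -> t2 <= PI/2 -> kf t2 < kf t1.
Proof.
intros h1 h12 h2.
destruct (MVT_cor2 kf kf' t1 t2 h12) as [c [hc1 hc2]].
- intros c hc; apply kf_deriv; split; lra.
- assert (kf' c < 0) by (apply kf'_neg; lra).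
  nra.
Qed.

Definition hf x := / sin (PI / (2 * x)).
Definition hf' x := kf (PI / (2 * x)) * 2 / PI.

Lemma hf_deriv x : 1 <= x -> derivable_pt_lim hf x (hf' x).
Proof.
intros hx.
assert (hp := PI_RGT_0).
assert (ht : 0 < PI / (2 * x) <= PI / 2).
{ split. apply Rdiv_lt_0_compat; lra.
  unfold Rdiv. apply Rmult_le_compat_l; [lra|].
  apply Rinv_le_contravar; lra. }
assert (hs : 0 < sin (PI / (2 * x))) by (apply sin_gt_0; lra).
apply is_derive_Reals; unfold hf, hf', kf.
auto_derive.
- split; [lra | split; [lra | auto]].
- unfold Rdiv in *. set (s := sin (PI * / (2 * x))) in *. set (c := cos (PI * / (2 * x))).
  field; repeat split; lra.
Qed.

Lemma hf'_incr x1 x2 : 1 <= x1 -> x1 < x2 -> hf' x1 < hf' x2.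
Proof.
intros h1 h12. unfold hf'.
assert (hp := PI_RGT_0).
assert (kf (PI / (2 * x1)) < kf (PI / (2 * x2))).
{ apply kf_decr.
  - apply Rdiv_lt_0_compat; lra.
  - unfold Rdiv; apply Rmult_lt_compat_l; [lra|].
    apply Rinv_lt_contravar; nra.
  - unfold Rdiv. apply Rmult_le_compat_l; [lra|].
    replace (/ 2) with (/ (2 * 1)) by (f_equal; ring).
    apply Rinv_le_contravar; lra. }
unfold Rdiv. apply Rmult_lt_compat_r. apply Rinv_0_lt_compat; lra. lra.
Qed.

Lemma hf_convex a b : 1 <= a -> a + 2 <= b -> hf (a + 2) - hf a < hf (b + 2) - hf b.
Proof.
intros ha hab.
destruct (MVT_cor2 hf hf' a (a + 2)) as [c1 [e1 hc1]]; [lra| intros c hc; apply hf_deriv; lra |].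
destruct (MVT_cor2 hf hf' b (b + 2)) as [c2 [e2 hc2]]; [lra| intros c hc; apply hf_deriv; lra |].
rewrite e1, e2.
assert (hf' c1 < hf' c2) by (apply hf'_incr; lra).
lra.
Qed.

End StdPart.

Require Import Defs.
From HB Require Import structures.
From mathcomp Require Import all_boot all_order all_algebra all_field.
From mathcomp Require Import boolp classical_sets reals Rstruct complex ring lra zify.
From Stdlib Require Import Lia.
Import Order.TTheory GRing.Theory Num.Theory.
Local Open Scope ring_scope.
Arguments sin _%_ring_scope. Arguments cos _%_ring_scope.

Definition cyc (k : nat) : 'M[algC]_k :=
  \matrix_(i < k, j < k) ((j : nat) == (i.+1 %% k)%N)%:R.

Lemma char_poly_cast (m n : nat) (e : m = n) (M : 'M[algC]_m) :
  char_poly (castmx (e, e) M) = char_poly M.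
Proof. by case: n / e; rewrite castmx_id. Qed.

Lemma char_poly_cyc k : (0 < k)%N -> char_poly (cyc k) = 'X^k - 1.
Proof.
move=> k0.
have e : (size ('X^k - 1 : {poly algC})).-1 = k.
  by rewrite -[1]/(1%:P) size_XnsubC.
have -> : cyc k = castmx (e, e) (companionmx ('X^k - 1 : {poly algC})).
  apply/matrixP => i j; rewrite castmxE !mxE /=.
  rewrite e coefB coefXn coefC.
  have jk : (j != k :> nat) by rewrite neq_ltn ltn_ord.
  rewrite (negPf jk) sub0r opprK.
  case: ifP => [/eqP ik | ik].
    have -> : (i.+1 %% k = 0)%N by rewrite ik prednK // modnn.
    by case: eqP.
  rewrite modn_small; last first.
    rewrite ltn_neqAle ltn_ord andbT; apply/negP => /eqP h.
    by move: ik; rewrite -[X in X.-1]h /= eqxx.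
  by rewrite eq_sym.
rewrite char_poly_cast companionmxK // monicE lead_coefE -[1]/(1%:P).
by rewrite size_XnsubC // coefB coefXn coefC eqxx /=; case: k k0 {e} => [|k] // _; rewrite subr0.
Qed.

Lemma Ds_block p q : Ds_mx (p + q) p q = block_mx (cyc p) 0 0 (cyc q).
Proof.
apply/matrixP => i j.
rewrite -(splitK i) -(splitK j).
case: (split i) => i'; case: (split j) => j'; rewrite /unsplit.
- rewrite block_mxEul !mxE /= ltn_ord //.
- rewrite block_mxEur !mxE /= ltn_ord.
  have hp : (0 < p)%N by apply: leq_ltn_trans (ltn_ord i').
  have : (i'.+1 %% p < p)%N by rewrite ltn_mod.
  by case: eqP => // h; move: (ltn_mod i'.+1 p); rewrite hp -h ltnNge leq_addr.
- rewrite block_mxEdl !mxE /= ltnNge leq_addr /= ltn_add2l ltn_ord addKn.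
  case: eqP => // h; have : (p <= j')%N by rewrite h leq_addr.
  by rewrite leqNgt ltn_ord.
- rewrite block_mxEdr !mxE /= ltnNge leq_addr /= ltn_add2l ltn_ord addKn.
  by rewrite eqn_add2l.
Qed.

Lemma char_poly_Ds p q : (0 < p)%N -> (0 < q)%N ->
  char_poly (Ds_mx (p + q) p q) = ('X^p - 1) * ('X^q - 1).
Proof.
move=> hp hq; rewrite Ds_block /char_poly char_block_diag_mx det_ublock.
by rewrite -!/(char_poly _) !char_poly_cyc.
Qed.

Lemma E_D_split p q : (0 < p)%N -> (0 < q)%N ->
  exists z w : algC, [/\ p.-primitive_root z, q.-primitive_root w &
  E_D (p + q) p q = \sum_(0 <= i < p) `|'Re (z ^+ i)| + \sum_(0 <= i < q) `|'Re (w ^+ i)|].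
Proof.
move=> hp hq.
have [z hz] := C_prim_root_exists hp; have [w hw] := C_prim_root_exists hq.
exists z, w; split => //.
rewrite /E_D /energy /spectrum.
case: (closed_field_poly_normal _) => s /= hs.
have : perm_eq s ([seq z ^+ i | i <- iota 0 p] ++ [seq w ^+ i | i <- iota 0 q]).
  apply: prod_XsubC_eq.
  rewrite big_cat /= !big_map -/(index_iota 0 p) -/(index_iota 0 q).
  have := factor_Xn_sub_1 hz; rewrite /index_iota subn0 => ->.
  have := factor_Xn_sub_1 hw; rewrite /index_iota subn0 => ->.
  by rewrite -char_poly_Ds // hs (monicP (char_poly_monic _)) scale1r.
move=> /(perm_big _) ->; rewrite big_cat !big_map.
by rewrite /index_iota !subn0.
Qed.

Lemma two_sin_cos (h y : R) : 2 * sin h * cos y = sin (y + h) - sin (y - h).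
Proof. rewrite !sinD sin_neg cos_neg ?RoppE; ring. Qed.

Lemma R2E : IZR (Zpos (xO xH)) = 2%:R :> R. Proof. by []. Qed.

Lemma cos_PI_sub (y : R) : cos (PI - y) = - cos y.
Proof.
rewrite cosD cos_PI sin_PI cos_neg ?RoppE.
change (IZR (Zneg xH)) with (- 1 : R); change (IZR 0) with (0:R); rewrite mul0r subr0 mulN1r; reflexivity.
Qed.

Lemma sum_abs_cos (M : nat) :
  \sum_(0 <= j < (M.*2).+1) `|cos (j%:R * (PI / ((M.*2).+1)%:R))| =
  (sin (PI / (2 * ((M.*2).+1)%:R)))^-1.
Proof.
set p := (M.*2).+1.
set h := PI / (2 * p%:R).
have hp : (p%:R : R) = 2 * M%:R + 1 by rewrite /p -mul2n -natr1 natrM.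
have PI0 : 0 < PI by apply/RltP; exact PI_RGT_0.
have hM : 0 <= (M%:R : R) by [].
have p0 : 0 < (p%:R : R) by rewrite hp; lra.
have ex : PI / p%:R = 2 * h by rewrite /h; field; lra.
have ph : p%:R * h = PI / 2 by rewrite /h; field; lra.
have pih : PI = 2 * (p%:R * h) by rewrite ph; field.
have h0 : 0 < h by rewrite /h divr_gt0 //; lra.
rewrite ex.
have sh0 : 0 < sin h.
  apply/RltP; apply sin_gt_0; apply/RltP => //.
  have : h <= p%:R * h by rewrite hp; nra.
  rewrite ph => H; lra.
have cos_ok : forall k, (k <= M)%N -> 0 <= cos (k%:R * (2 * h)).
  move=> k hk; apply/RleP; apply cos_ge_0; apply/RleP; rewrite ?RoppE RdivE R2E.
    have : 0 <= k%:R * (2 * h) by apply: mulr_ge0 => //; lra.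
    lra.
  have hk' : (k%:R : R) <= M%:R by rewrite ler_nat.
  have : k%:R * (2 * h) <= M%:R * (2 * h) by rewrite ler_pM2r //; lra.
  have : M%:R * (2 * h) <= p%:R * h by rewrite hp; nra.
  rewrite ph; lra.
have S1 : forall j, (0 <= j < M.+1)%N ->
    2 * sin h * `|cos (j%:R * (2 * h))| =
    sin (j.+1%:R * (2 * h) - h) - sin (j%:R * (2 * h) - h).
  move=> j /andP [_ hj]; rewrite ger0_norm ?cos_ok // two_sin_cos -natr1.
  by congr (sin _ - sin _); ring.
have S2 : forall j, (M.+1 <= j < p)%N ->
    2 * sin h * `|cos (j%:R * (2 * h))| =
    - sin ((p - j.+1)%:R * (2 * h) + h) - - sin ((p - j)%:R * (2 * h) + h).
  move=> j /andP [hj1 hj2].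
  have ej : (j%:R : R) * (2 * h) = PI - (p - j)%:R * (2 * h).
    rewrite natrB ?(ltnW hj2) //; rewrite [in RHS]pih; ring.
  rewrite ej cos_PI_sub normrN ger0_norm; last first.
    apply: cos_ok; rewrite leq_subLR /p -addnn; move: hj1; rewrite /p; lia.
  rewrite two_sin_cos.
  have e2 : (p - j)%:R = (p - j.+1)%:R + 1 :> R.
    by rewrite natr1 subnSK.
  rewrite e2 opprK [in RHS]addrC; congr (_ - sin _); ring.
have E : 2 * sin h * \sum_(0 <= j < p) `|cos (j%:R * (2 * h))| = 2.
  rewrite mulr_sumr (big_cat_nat _ (n := M.+1)) //=; last by rewrite /p ltnS -addnn leq_addr.
  rewrite (telescope_sumr_eq (fun j => sin (j%:R * (2 * h) - h))) //.
  rewrite (telescope_sumr_eq (fun j => - sin ((p - j)%:R * (2 * h) + h))) //; last first.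
    by rewrite /p ltnS -addnn leq_addr.
  rewrite subnn mul0r add0r.
  have e3 : (p - M.+1)%N = M by rewrite /p -addnn subSS addnK.
  rewrite e3 -natr1 add0r.
  have e4 : (M%:R + 1) * (2 * h) - h = M%:R * (2 * h) + h by ring.
  have e5 : M%:R * (2 * h) + h = PI / 2 by rewrite -ph hp; ring.
  rewrite e4 e5 sin_PI2 sin_neg ?RoppE. rewrite R1E. ring.
have sne : sin h != 0 by rewrite gt_eqF.
have t0 : 2 * sin h != 0 by rewrite mulf_eq0 negb_or sne andbT pnatr_eq0.
apply: (mulfI t0).
by rewrite E -mulrA mulfV // mulr1.
Qed.

Local Open Scope classical_set_scope.
Definition phiset (a : algC) : set R :=
  [set y | exists q : rat, ratr q <= a /\ y = ratr q].
Definition phi (a : algC) : R := sup (phiset ('Re a)).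

Lemma ratrC_le (q r : rat) : ((ratr q : algC) <= ratr r) = ((ratr q : R) <= ratr r).
Proof. by rewrite !ler_rat. Qed.
Lemma ratrC_lt (q r : rat) : ((ratr q : algC) < ratr r) = ((ratr q : R) < ratr r).
Proof. by rewrite !ltr_rat. Qed.

Lemma phiset_sup {a : algC} : a \is Num.real -> has_sup (phiset a).
Proof.
move=> ar; have /andP [h1 h2] := real_floor_itv ar.
split.
  exists (ratr (Num.floor a)%:~R); exists (Num.floor a)%:~R; split => //.
  by rewrite ratr_int.
exists (ratr (Num.floor a + 1)%:~R) => y [q [hq ->]].
rewrite -ratrC_le ratr_int; apply: ltW; exact: le_lt_trans hq h2.
Qed.

Section Phi.
Variable a : algC.
Hypothesis ar : a \is Num.real.

Lemma phiRe : phi a = sup (phiset a).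
Proof. by rewrite /phi (Creal_ReP _ ar). Qed.

Lemma K1 q : ratr q <= a -> ratr q <= phi a.
Proof.
move=> h; rewrite phiRe; apply: sup_upper_bound; first exact: phiset_sup.
by exists q.
Qed.

Lemma K2 q : a <= ratr q -> phi a <= ratr q.
Proof.
move=> h; rewrite phiRe; apply: ge_sup; first by case: (phiset_sup ar).
move=> y [r [hr ->]]; rewrite -ratrC_le; exact: le_trans hr h.
Qed.

Lemma K1' q : ratr q < phi a -> ratr q < a.
Proof.
move=> h; rewrite real_ltNge ?rpred_rat //; apply/negP => /K2.
by rewrite leNgt h.
Qed.

Lemma K2' q : phi a < ratr q -> a < ratr q.
Proof.
move=> h; rewrite real_ltNge ?rpred_rat //; apply/negP => /K1.
by rewrite leNgt h.
Qed.

Lemma phi_unique (y : R) :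
  (forall q, ratr q < a -> ratr q <= y) ->
  (forall q, a < ratr q -> y <= ratr q) -> y = phi a.
Proof.
move=> h1 h2; apply/eqP; rewrite eq_le; apply/andP; split.
  rewrite leNgt; apply/negP => /rat_in_itvoo [q]; rewrite in_itv /= => /andP [hq1 hq2].
  by have := h2 q (K2' _ hq1); rewrite leNgt hq2.
rewrite leNgt; apply/negP => /rat_in_itvoo [q]; rewrite in_itv /= => /andP [hq1 hq2].
by have := h1 q (K1' _ hq2); rewrite leNgt hq1.
Qed.

Lemma approx_up (e : R) : 0 < e -> exists q, phi a < ratr q < phi a + e /\ a < ratr q.
Proof.
move=> e0; have : phi a < phi a + e by lra.
move=> /rat_in_itvoo [q]; rewrite in_itv /= => /andP [hq1 hq2].
by exists q; rewrite hq1 hq2; split => //; apply: K2'.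
Qed.

Lemma approx_down (e : R) : 0 < e -> exists q, phi a - e < ratr q < phi a /\ ratr q < a.
Proof.
move=> e0; have : phi a - e < phi a by lra.
move=> /rat_in_itvoo [q]; rewrite in_itv /= => /andP [hq1 hq2].
by exists q; rewrite hq1 hq2; split => //; apply: K1'.
Qed.

End Phi.
Arguments approx_up {a}. Arguments approx_down {a}. Arguments K1 {a}.
Arguments K2 {a}. Arguments K1' {a}. Arguments K2' {a}. Arguments phi_unique {a}.

Lemma phi_rat q : phi (ratr q) = ratr q.
Proof.
have r : (ratr q : algC) \is Num.real by rewrite rpred_rat.
symmetry; apply: phi_unique => // r' h; apply: ltW; by rewrite -ratrC_lt.
Qed.

Lemma phi0 : phi 0 = 0.
Proof. by have := phi_rat 0; rewrite !rmorph0. Qed.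

Lemma phi1 : phi 1 = 1.
Proof. by have := phi_rat 1; rewrite !rmorph1. Qed.

Lemma phi_add {a b} : a \is Num.real -> b \is Num.real -> phi (a + b) = phi a + phi b.
Proof.
move=> ar br; symmetry; apply: phi_unique; first exact: rpredD.
- move=> q hq; rewrite leNgt; apply/negP => hlt.
  set e := (ratr q - phi a - phi b) / 2.
  have e0 : 0 < e by rewrite /e; lra.
  have [u [/andP [hu1 hu2] hu]] := approx_up ar _ e0.
  have [v [/andP [hv1 hv2] hv]] := approx_up br _ e0.
  have : (ratr (u + v) : R) < ratr q by rewrite rmorphD /=; rewrite /e in hu2 hv2; lra.
  rewrite -ratrC_lt rmorphD /= => huv.
  have : a + b < ratr u + ratr v by apply: ltrD.
  move=> h; have := lt_trans (lt_trans hq h) huv; by rewrite ltxx.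
- move=> q hq; rewrite leNgt; apply/negP => hlt.
  set e := (phi a + phi b - ratr q) / 2.
  have e0 : 0 < e by rewrite /e; lra.
  have [u [/andP [hu1 hu2] hu]] := approx_down ar _ e0.
  have [v [/andP [hv1 hv2] hv]] := approx_down br _ e0.
  have : (ratr q : R) < ratr (u + v) by rewrite rmorphD /=; rewrite /e in hu1 hv1; lra.
  rewrite -ratrC_lt rmorphD /= => huv.
  have : ratr u + ratr v < a + b by apply: ltrD.
  move=> h; have := lt_trans (lt_trans huv h) hq; by rewrite ltxx.
Qed.

Lemma phi_opp {a} : a \is Num.real -> phi (- a) = - phi a.
Proof.
move=> ar; have nr : - a \is Num.real by rewrite rpredN.
have := phi_add ar nr; rewrite subrr phi0 => h.
by apply/eqP; rewrite -subr_eq0 opprK addrC -h.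
Qed.

Lemma phi_sub {a b} : a \is Num.real -> b \is Num.real -> phi (a - b) = phi a - phi b.
Proof. by move=> ar br; rewrite phi_add ?rpredN // phi_opp. Qed.

Lemma phi_ge0 {a} : 0 <= a -> 0 <= phi a.
Proof.
move=> h; have ar : a \is Num.real by rewrite ger0_real.
by have := K1 ar 0; rewrite !rmorph0; apply.
Qed.

Lemma phi_gt0 {a} : 0 < a -> 0 < phi a.
Proof.
move=> h; have ar : a \is Num.real by rewrite gtr0_real.
have ai : a^-1 \is Num.real by rewrite rpredV.
have /andP [_ h2] := real_floor_itv ai.
set m := (Num.floor a^-1 + 1).
have m0 : (0 : algC) < m%:~R by apply: lt_trans h2; rewrite invr_gt0.
have m0' : 0 < m by rewrite -(ltr_int algC).
have hq : (ratr (m%:~R)^-1 : algC) < a.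
  rewrite fmorphV rmorph_int.
  by rewrite -(invrK a) ltf_pV2 // ?posrE ?invr_gt0.
have := K1 ar _ (ltW hq); apply: lt_le_trans.
by rewrite ltr0q invr_gt0 ltr0z.
Qed.

Lemma phi_le {a b} : a \is Num.real -> b \is Num.real -> a <= b -> phi a <= phi b.
Proof.
move=> ar br h; rewrite -subr_ge0 -phi_sub //; apply: phi_ge0; by rewrite subr_ge0.
Qed.

Lemma phi_lt {a b} : a \is Num.real -> b \is Num.real -> a < b -> phi a < phi b.
Proof.
move=> ar br h; rewrite -subr_gt0 -phi_sub //; apply: phi_gt0; by rewrite subr_gt0.
Qed.

Lemma phi_lt_rev {a b} : a \is Num.real -> b \is Num.real -> phi a < phi b -> a < b.
Proof.
move=> ar br h; rewrite real_ltNge //; apply/negP => /(phi_le br ar).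
by rewrite leNgt h.
Qed.

Lemma phi_le_rev {a b} : a \is Num.real -> b \is Num.real -> phi a <= phi b -> a <= b.
Proof.
move=> ar br h; rewrite real_leNgt //; apply/negP => /(phi_lt br ar).
by rewrite ltNge h.
Qed.

Lemma small_pos (x y z : R) : 0 < x -> 0 < y -> 0 < z ->
  exists e : R, [/\ 0 < e, e < x, e < y & e < z].
Proof.
move=> x0 y0 z0; set m := Num.min x (Num.min y z).
have m0 : 0 < m by rewrite !lt_min x0 y0 z0.
have mx : m <= x by rewrite ge_min lexx.
have my : m <= y by rewrite !ge_min lexx orbT.
have mz : m <= z by rewrite !ge_min lexx !orbT.
exists (m / 2); split; lra.
Qed.

Lemma phi_mul_pos a b : 0 <= a -> 0 <= b -> phi (a * b) = phi a * phi b.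
Proof.
move=> a0 b0.
have ar : a \is Num.real by rewrite ger0_real.
have br : b \is Num.real by rewrite ger0_real.
have A0 := phi_ge0 a0; have B0 := phi_ge0 b0.
symmetry; apply: phi_unique; first exact: rpredM.
- move=> q hq; rewrite leNgt; apply/negP => hlt.
  set d := ratr q - phi a * phi b.
  have d0 : 0 < d by rewrite /d; lra.
  have z0 : 0 < d / (phi a + phi b + 1) by rewrite divr_gt0 //; lra.
  have [e [e0 e1 _ e2]] := small_pos _ _ _ ltr01 ltr01 z0.
  have e3 : e * (phi a + phi b + 1) < d by rewrite -ltr_pdivlMr //; lra.
  have [u [/andP [hu1 hu2] hu]] := approx_up ar _ e0.
  have [v [/andP [hv1 hv2] hv]] := approx_up br _ e0.
  have : (ratr (u * v) : R) < ratr q.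
    rewrite rmorphM /=.
    have : ratr u * ratr v <= (phi a + e) * (phi b + e) :> R.
      apply: ler_pM; try lra.
    rewrite /d in e3; nra.
  rewrite -ratrC_lt rmorphM /= => huv.
  have : a * b < ratr u * ratr v by apply: ltr_pM.
  move=> h; have := lt_trans (lt_trans hq h) huv; by rewrite ltxx.
- move=> q hq; rewrite leNgt; apply/negP => hlt.
  have q0 : (0 : algC) < ratr q by apply: le_lt_trans hq; apply: mulr_ge0.
  have q0' : (0 : R) < ratr q by rewrite ltr0q; rewrite ltr0q in q0.
  have AB0 : 0 < phi a * phi b by apply: lt_trans q0' hlt.
  have A0' : 0 < phi a.
    rewrite lt_neqAle A0 andbT; apply/eqP => h; move: AB0; by rewrite -h mul0r ltxx.
  have B0' : 0 < phi b.
    rewrite lt_neqAle B0 andbT; apply/eqP => h; move: AB0; by rewrite -h mulr0 ltxx.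
  set d := phi a * phi b - ratr q.
  have d0 : 0 < d by rewrite /d; lra.
  have z0 : 0 < d / (phi a + phi b + 1) by rewrite divr_gt0 //; lra.
  have [e [e0 e1 e4 e2]] := small_pos _ _ _ A0' B0' z0.
  have e3 : e * (phi a + phi b + 1) < d by rewrite -ltr_pdivlMr //; lra.
  have [u [/andP [hu1 hu2] hu]] := approx_down ar _ e0.
  have [v [/andP [hv1 hv2] hv]] := approx_down br _ e0.
  have : (ratr q : R) < ratr (u * v).
    rewrite rmorphM /=.
    have : (phi a - e) * (phi b - e) <= ratr u * ratr v :> R.
      apply: ler_pM; try lra.
    rewrite /d in e3; nra.
  rewrite -ratrC_lt rmorphM /= => huv.
  have u0 : (0 : algC) <= ratr u by rewrite ler0q -(ler0q R); lra.
  have v0 : (0 : algC) <= ratr v by rewrite ler0q -(ler0q R); lra.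
  have : ratr u * ratr v < a * b by apply: ltr_pM.
  move=> h; have := lt_trans (lt_trans huv h) hq; by rewrite ltxx.
Qed.

Lemma phi_mul a b : a \is Num.real -> b \is Num.real -> phi (a * b) = phi a * phi b.
Proof.
move=> ar br.
have key : forall x : algC, x \is Num.real -> 0 <= x \/ 0 <= - x.
  move=> x xr; case: (real_ge0P xr) => h; [left|right] => //; rewrite oppr_ge0; exact: ltW.
case: (key a ar) => ha; case: (key b br) => hb.
- exact: phi_mul_pos.
- rewrite -[b]opprK mulrN phi_opp ?rpredM ?rpredN // phi_mul_pos //.
  by rewrite phi_opp ?rpredN // opprK mulrN opprK.
- rewrite -[a]opprK mulNr phi_opp ?rpredM ?rpredN // phi_mul_pos //.
  by rewrite phi_opp ?rpredN // opprK mulNr opprK.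
- rewrite -[a]opprK -[b]opprK mulrNN phi_mul_pos //.
  by rewrite !phi_opp ?rpredN // !opprK mulrNN.
Qed.

Arguments sin _%_ring_scope. Arguments cos _%_ring_scope.

Definition Phi (z : algC) : R[i] := (phi ('Re z) +i* phi ('Im z))%C.

Lemma Phi1 : Phi 1 = 1.
Proof.
rewrite /Phi (Creal_ReP _ (rpred1 _)) (Creal_ImP _ (rpred1 _)) phi1 phi0.
reflexivity.
Qed.

Lemma PhiM z w : Phi (z * w) = Phi z * Phi w.
Proof.
rewrite /Phi ReM ImM.
have r := Creal_Re; have i := Creal_Im.
rewrite phi_sub ?rpredM // !phi_mul // phi_add ?rpredM // !phi_mul //.
transitivity ((phi ('Re z) * phi ('Re w) - phi ('Im z) * phi ('Im w)) +i*
  (phi ('Re z) * phi ('Im w) + phi ('Im z) * phi ('Re w)))%C; last by reflexivity.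
by rewrite [phi ('Re w) * _]mulrC [phi ('Im z) * _]mulrC.
Qed.

Lemma PhiX z n : Phi (z ^+ n) = Phi z ^+ n.
Proof. by elim: n => [|n IH]; rewrite ?expr0 ?Phi1 // !exprS PhiM IH. Qed.

Lemma phi_inj_real {a b} : a \is Num.real -> b \is Num.real -> phi a = phi b -> a = b.
Proof.
move=> ar br h; apply/eqP; rewrite eq_le.
by rewrite (phi_le_rev ar br) ?(phi_le_rev br ar) ?h.
Qed.

Lemma Phi_inj : injective Phi.
Proof.
move=> z w [h1 h2].
rewrite [z]algCrect [w]algCrect.
by rewrite (phi_inj_real (Creal_Re _) (Creal_Re _) h1) (phi_inj_real (Creal_Im _) (Creal_Im _) h2).
Qed.

Lemma deMoivre (t : R) n :
  (cos t +i* sin t)%C ^+ n = (cos (n%:R * t) +i* sin (n%:R * t))%C.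
Proof.
elim: n => [|n IH]; first by rewrite expr0 mul0r cos_0 sin_0; reflexivity.
rewrite exprS IH.
transitivity ((cos t * cos (n%:R * t) - sin t * sin (n%:R * t)) +i*
   (cos t * sin (n%:R * t) + sin t * cos (n%:R * t)))%C; first reflexivity.
rewrite -natr1 mulrDl mul1r [_ + t]addrC cosD sinD; congr Complex; ring.
Qed.

Lemma ReN (y : R[i]) : complex.Re (- y) = - complex.Re y. Proof. by case: y => a b; reflexivity. Qed.
Lemma ImN (y : R[i]) : complex.Im (- y) = - complex.Im y. Proof. by case: y => a b; reflexivity. Qed.

Lemma signM (n : nat) (y : R[i]) : (-1) ^+ n * y = if odd n then - y else y.
Proof. by rewrite -signr_odd; case: (odd n); rewrite ?expr0 ?expr1 ?mul1r ?mulN1r. Qed.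

Section Count.
Variable p : nat.
Hypothesis p0 : (0 < p)%N.
Hypothesis podd : odd p.

Let th : R := PI / p%:R.
Let om : R[i] := (- (cos th +i* sin th))%C.

Lemma omX n : om ^+ n = (-1) ^+ n * (cos (n%:R * th) +i* sin (n%:R * th))%C.
Proof. by rewrite /om [LHS]exprNn deMoivre. Qed.

Lemma pth : p%:R * th = PI.
Proof. by rewrite /th mulrC divfK // pnatr_eq0 -lt0n. Qed.

Lemma omp : om ^+ p = 1.
Proof.
rewrite omX pth cos_PI sin_PI signM podd.
change (IZR (Zneg xH)) with (- 1 : R); change (IZR Z0) with (0 : R).
apply/eqP; rewrite eq_complex /= opprK oppr0 !eqxx //.
Qed.

Lemma om_neq0 : om != 0.
Proof. apply/negP => /eqP h; have := omp; rewrite h expr0n gtn_eqF //= => /eqP; by rewrite eq_sym oner_eq0. Qed.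

Lemma sin_pos d : (0 < d < p)%N -> 0 < sin (d%:R * th).
Proof.
move=> /andP [d0 dp]; apply/RltP; apply sin_gt_0; apply/RltP.
  by rewrite mulr_gt0 // ?ltr0n // /th divr_gt0 ?ltr0n //; apply/RltP; exact PI_RGT_0.
rewrite -pth ltr_pM2r ?ltr_nat // /th divr_gt0 ?ltr0n //; apply/RltP; exact PI_RGT_0.
Qed.

Lemma om_uniq : uniq [seq om ^+ i | i <- iota 0 p].
Proof.
rewrite map_inj_in_uniq ?iota_uniq // => i j; rewrite !mem_iota !add0n => hi hj.
wlog lij : i j hi hj / (i <= j)%N.
  move=> W h; case: (leqP i j) => l; first exact: W.
  by symmetry; apply: W => //; apply: ltnW.
move=> e; apply/eqP; rewrite eqn_leq lij /=; rewrite leqNgt; apply/negP => ij.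
have hd : om ^+ (j - i) = 1.
  apply: (mulfI (expf_neq0 i om_neq0)); rewrite -exprD subnKC ?(ltnW ij) //.
  by rewrite mulr1 e.
have s0 : 0 < sin ((j - i)%:R * th).
  by apply: sin_pos; rewrite subn_gt0 ij /=; lia.
have I1 : complex.Im (1 : R[i]) = 0 by reflexivity.
have := congr1 (@complex.Im R) hd; rewrite omX signM I1.
case: (odd _); rewrite ?ImN /= => h.
  by move/eqP: h; rewrite oppr_eq0 => /eqP h; rewrite h ltxx in s0.
by rewrite h ltxx in s0.
Qed.

Lemma om_roots : all (root ('X^p - 1)) [seq om ^+ i | i <- iota 0 p].
Proof.
apply/allP => x /mapP [i _ ->]; rewrite rootE !hornerE -exprM mulnC exprM omp expr1n subrr //.
Qed.

End Count.

Lemma sum_Phi (p : nat) (z : algC) : (0 < p)%N -> odd p -> p.-primitive_root z ->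
  \sum_(0 <= i < p) `|complex.Re (Phi (z ^+ i))| =
  \sum_(0 <= i < p) `|cos (i%:R * (PI / p%:R))|.
Proof.
move=> p0 podd hz.
set om : R[i] := (- (cos (PI / p%:R) +i* sin (PI / p%:R)))%C.
set L1 := [seq Phi z ^+ i | i <- iota 0 p].
set L2 := [seq om ^+ i | i <- iota 0 p].
have uL2 : uniq L2 := om_uniq _ p0 podd.
have rL2 : all (root ('X^p - 1)) L2 := om_roots _ p0 podd.
have uL1 : uniq L1.
  rewrite map_inj_in_uniq ?iota_uniq // => i j; rewrite !mem_iota !add0n => hi hj.
  have hi' : (i < p)%N by case/andP: hi.
  have hj' : (j < p)%N by case/andP: hj.
  rewrite -!PhiX => /Phi_inj /eqP; rewrite (eq_prim_root_expr hz) !modn_small //.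
  by move/eqP.
have rL1 : all (root ('X^p - 1)) L1.
  apply/allP => x /mapP [i _ ->]; rewrite rootE !hornerE -exprM mulnC exprM.
  by rewrite -PhiX (prim_expr_order hz) Phi1 expr1n subrr.
have sP : size ('X^p - 1 : {poly R[i]}) = p.+1 by rewrite -[1]/(1%:P) size_XnsubC.
have P0 : ('X^p - 1 : {poly R[i]}) != 0 by rewrite -size_poly_eq0 sP.
have sub : {subset L2 <= L1}.
  move=> x xL2; apply/negPn/negP => xL1.
  have := @max_poly_roots _ _ (x :: L1) P0.
  rewrite /= uL1 xL1 (allP rL2 x xL2) rL1 /= sP size_map size_iota ltnn.
  by move=> /(_ isT isT).
have sz : (size L1 <= size L2)%N by rewrite !size_map.
have [_ eqL] := uniq_min_size uL2 sub sz.
have pe : perm_eq L2 L1 := uniq_perm uL2 uL1 eqL.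
have -> : \sum_(0 <= i < p) `|complex.Re (Phi (z ^+ i))| = \sum_(x <- L1) `|complex.Re x|.
  by rewrite big_map /index_iota subn0; apply: eq_bigr => i _; rewrite PhiX.
rewrite -(perm_big _ pe) big_map /index_iota subn0; apply: eq_bigr => i _.
rewrite omX signM; case: (odd i); rewrite ?ReN ?normrN //.
Qed.


Lemma phi_norm x : x \is Num.real -> phi `|x| = `|phi x|.
Proof.
move=> xr; have [h|h] := boolP (0 <= x).
  by rewrite (ger0_norm h) ger0_norm // phi_ge0.
have {}h : x < 0 by rewrite real_ltNge ?rpred0.
rewrite (ltr0_norm h) phi_opp // ltr0_norm //.
by rewrite -phi0; apply: phi_lt => //; rewrite rpred0.
Qed.

Lemma phi_sum (s : seq nat) (F : nat -> algC) : (forall i, F i \is Num.real) ->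
  phi (\sum_(i <- s) F i) = \sum_(i <- s) phi (F i).
Proof.
move=> Fr; elim: s => [|a s IH]; first by rewrite !big_nil phi0.
rewrite !big_cons phi_add ?IH //; apply: rpred_sum => i _; exact: Fr.
Qed.

Definition g (p : nat) : R := (sin (PI / (2 * p%:R)))^-1.

Lemma sum_part (p : nat) (z : algC) : odd p -> p.-primitive_root z ->
  phi (\sum_(0 <= i < p) `|'Re (z ^+ i)|) = g p.
Proof.
move=> podd hz; have p0 : (0 < p)%N by case: p podd hz.
rewrite phi_sum; last by move=> i; rewrite ger0_real.
transitivity (\sum_(0 <= i < p) `|complex.Re (Phi (z ^+ i))|).
  by apply: eq_bigr => i _; rewrite phi_norm ?Creal_Re.
rewrite sum_Phi //.
have hp : p = (p./2).*2.+1 by rewrite -[p in LHS]odd_double_half podd.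
by rewrite /g hp sum_abs_cos.
Qed.

Lemma phiE p q : odd p -> odd q ->
  E_D (p + q) p q \is Num.real /\ phi (E_D (p + q) p q) = g p + g q.
Proof.
move=> podd qodd.
have p0 : (0 < p)%N by case: p podd.
have q0 : (0 < q)%N by case: q qodd.
have [z [w [hz hw ->]]] := E_D_split _ _ p0 q0.
have r1 : \sum_(0 <= i < p) `|'Re (z ^+ i)| \is Num.real.
  by apply: rpred_sum => i _; rewrite ger0_real.
have r2 : \sum_(0 <= i < q) `|'Re (w ^+ i)| \is Num.real.
  by apply: rpred_sum => i _; rewrite ger0_real.
split; first exact: rpredD.
by rewrite phi_add // (sum_part _ _ podd hz) (sum_part _ _ qodd hw).
Qed.

Lemma g_hf p : g p = StdPart.hf (p%:R).
Proof. reflexivity. Qed.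

Lemma gconv (a b : nat) : (1 <= a)%N -> (a + 2 <= b)%N ->
  g (a + 2) - g a < g (b + 2) - g b.
Proof.
move=> h1 h2.
have H1 : Rle 1 (a%:R) by apply/RleP; rewrite ler1n.
have H2 : Rle (Rplus (a%:R) 2) (b%:R).
  apply/RleP; rewrite RplusE R2E -natrD ler_nat //.
have := StdPart.hf_convex _ _ H1 H2.
rewrite !g_hf !natrD -R2E; move/RltP; exact.
Qed.

Lemma odd_form r : odd r -> r = (2 * r./2).+1.
Proof. by move=> ro; rewrite mul2n -[r in LHS]odd_double_half ro. Qed.

Lemma E_phi n r : odd r -> odd (n - r) -> (r <= n)%N ->
  E_D n r (n - r) \is Num.real /\ phi (E_D n r (n - r)) = g r + g (n - r).
Proof. by move=> ro nro rn; have := phiE _ _ ro nro; rewrite subnKC. Qed.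

Lemma step n r : (2 * r + 4 <= n)%N -> odd r ->
  g (r + 2) + g (n - (r + 2)) < g r + g (n - r).
Proof.
move=> h ro; have r1 : (1 <= r)%N by case: r ro h.
have hb : (r + 2 <= n - r - 2)%N by lia.
have := gconv r (n - r - 2) r1 hb.
have -> : (n - r - 2 + 2 = n - r)%N by lia.
have -> : (n - (r + 2) = n - r - 2)%N by lia.
move=> H; lra.
Qed.

Lemma chain n k : (2 * (3 + 2 * k) <= n)%N ->
  g (3 + 2 * k) + g (n - (3 + 2 * k)) <= g 3 + g (n - 3).
Proof.
elim: k => [|k IH] h; first by rewrite muln0 addn0.
have h1 : (2 * (3 + 2 * k) <= n)%N by lia.
have h2 : (2 * (3 + 2 * k) + 4 <= n)%N by lia.
have := IH h1.
have := step _ _ h2.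
have e : (3 + 2 * k + 2 = 3 + 2 * k.+1)%N by lia.
rewrite e => H1 H2.
have o : odd (3 + 2 * k) by rewrite oddD oddM.
have := H1 o; lra.
Qed.

Lemma chain_odd n r : odd r -> (3 <= r)%N -> (2 * r <= n)%N ->
  g r + g (n - r) <= g 3 + g (n - 3).
Proof.
move=> ro r3 h; have er := odd_form _ ro.
have -> : r = (3 + 2 * (r./2 - 1))%N by lia.
apply: chain; lia.
Qed.

Theorem lemma3p14 (n : nat) :
  (5 < n)%N -> (n %% 4 = 0)%N ->
  (* maximum over odd r in [3, n-3] is attained at r = 3 *)
  (forall r : nat, odd r -> (3 <= r)%N -> (r <= n - 3)%N ->
     E_D n r (n - r) <= E_D n 3 (n - 3))
  /\
  (* strictly decreasing chain over odd r = 3, 5, ..., (n-2)/2 *)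
  (forall r : nat, odd r -> (3 <= r)%N -> (r + 2 <= (n - 2) %/ 2)%N ->
     E_D n (r + 2) (n - (r + 2)) < E_D n r (n - r)).
Proof.
move=> n5 n4.
have en : n = (4 * (n %/ 4))%N by rewrite {1}(divn_eq n 4) n4 addn0 mulnC.
have ne : ~~ odd n by rewrite en oddM.
have oddsub : forall r, odd r -> (r <= n)%N -> odd (n - r).
  by move=> r ro rn; rewrite oddB // (negPf ne) ro.
have n3 : (3 <= n)%N by lia.
have [E3r E3] := E_phi n 3 isT (oddsub 3 isT n3) n3.
split.
- move=> r ro r3 rn.
  have rn' : (r <= n)%N by lia.
  have [Err Er] := E_phi _ _ ro (oddsub r ro rn') rn'.
  apply: (phi_le_rev Err E3r); rewrite Er E3.
  case: (leqP (2 * r) n) => h.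
    exact: chain_odd.
  have ro' : odd (n - r) by apply: oddsub; lia.
  have a1 : (3 <= n - r)%N by lia.
  have a2 : (2 * (n - r) <= n)%N by lia.
  have := chain_odd _ _ ro' a1 a2.
  have -> : (n - (n - r) = r)%N by lia.
  by rewrite addrC.
- move=> r ro r3 h.
  have h' : (2 * r + 4 <= n)%N.
    have : ((r + 2) * 2 <= n - 2)%N by rewrite -leq_divRL.
    lia.
  have ro2 : odd (r + 2) by rewrite oddD ro.
  have rn' : (r <= n)%N by lia.
  have rn2 : (r + 2 <= n)%N by lia.
  have [Err Er] := E_phi _ _ ro (oddsub r ro rn') rn'.
  have [Err2 Er2] := E_phi _ _ ro2 (oddsub (r + 2) ro2 rn2) rn2.
  apply: (phi_lt_rev Err2 Err); rewrite Er Er2.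
  exact: step.
Qed.
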